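(* Let $\mu=(p,q,r,s)\in\mathbb{C}^4$ and $\phi\in\Phi_\mu$. Suppose $X\in\Omega_1$, $Y\in\Omega_2$, $Z\in\Omega_3$ meet at a vertex $v$, and the arrows assigned by $\phi$ on the edges $X\cap Y$ and $X\cap Z$ both point away from $v$. Then, writing $x=\phi(X),y=\phi(Y),z=\phi(Z)$, at least one of the following holds: $|x|\le 2+\frac{|q|+|r|}{4}$; $|y|<2$; $|z|<2$.
   Context: Let $\Sigma$ be a countably infinite simplicial tree, properly embedded in the plane, all of whose vertices have degree $3$. A complementary region is the closure of a connected component of the complement of $\Sigma$; $\Omega$ is the set of complementary regions, $E(\Sigma)$ the set of edges. Every edge $e$ is the intersection of exactly two regions $X,Y$, and its two endpoints lie on two further regions $Z,W$ respectively; write $e\leftrightarrow(X,Y;Z,W)$. Three regions meet at each vertex. Fix a coloring $\mathcal C:\Omega\cup E(\Sigma)\to\{1,2,3\}$ such that for every $e\leftrightarrow(X,Y;Z,W)$, $\mathcal C(e)=\mathcal C(Z)=\mathcal C(W)$ and $\mathcal C(e),\mathcal C(X),\mathcal C(Y)$ are pairwise distinct; $\Omega_i$, $E_i$ denote regions/edges of color $i$. For $\mu=(p,q,r,s)\in\mathbb{C}^4$, a $\mu$-Markoff map is $\phi:\Omega\to\mathbb{C}$ such that (i) at every vertex with regions $X\in\Omega_1,Y\in\Omega_2,Z\in\Omega_3$, $x^2+y^2+z^2+xyz=px+qy+rz+s$ where $x=\phi(X)$, etc.; (ii) for $e\in E_1$, $e\leftrightarrow(Y,Z;X,X')$: $\phi(X)+\phi(X')=p-\phi(Y)\phi(Z)$;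 for $e\in E_2$, $e\leftrightarrow(X,Z;Y,Y')$: $\phi(Y)+\phi(Y')=q-\phi(X)\phi(Z)$; for $e\in E_3$, $e\leftrightarrow(X,Y;Z,Z')$: $\phi(Z)+\phi(Z')=r-\phi(X)\phi(Y)$. $\Phi_\mu$ is the set of such maps. Arrows: given $\phi$ and an edge $e\leftrightarrow(X,Y;Z,W)$, orient $e$ towards its endpoint lying on $W$ if $|\phi(Z)|>|\phi(W)|$, towards its endpoint lying on $Z$ if $|\phi(Z)|<|\phi(W)|$, and arbitrarily (but fixed) if $|\phi(Z)|=|\phi(W)|$. *)

(* Defs.v *)
From HB Require Import structures.
From mathcomp Require Import all_boot all_order all_algebra.
From mathcomp Require Import complex.
From mathcomp Require Import Rstruct.
Set Implicit Arguments. Unset Strict Implicit. Unset Printing Implicit Defensive.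
Import Order.TTheory GRing.Theory Num.Theory.
Local Open Scope ring_scope.

Notation CC := (Rdefinitions.R[i]).

Inductive colour := colour1 | colour2 | colour3.

(* Combinatorial data of the (planar, trivalent) tree Sigma together with
   its complementary regions and the colouring C.  An edge e is recorded as
   e <-> (X,Y;Z,W): side1 e = X, side2 e = Y are the two regions whose
   intersection is e, end1 e / end2 e are its two endpoints, and
   opp1 e = Z (the further region at end1 e), opp2 e = W (at end2 e). *)
Record coloured_tree := {
  region : Type;
  vertex : Type;
  edge : Type;
  meets : vertex -> region -> Prop;
  side1 : edge -> region;
  side2 : edge -> region;
  end1 : edge -> vertex;
  end2 : edge -> vertex;
  opp1 : edge -> region;
  opp2 : edge -> region;
  rcol : region -> colour;
  ecol : edge -> colour;
  ends_distinct : forall e, end1 e <> end2 e;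
  meets_end1 : forall e, [/\ meets (end1 e) (side1 e), meets (end1 e) (side2 e)
                           & meets (end1 e) (opp1 e)];
  meets_end2 : forall e, [/\ meets (end2 e) (side1 e), meets (end2 e) (side2 e)
                           & meets (end2 e) (opp2 e)];
  three_at_vertex : forall v, exists X Y Z,
      [/\ X <> Y, Y <> Z, X <> Z &
          forall W, meets v W <-> (W = X \/ W = Y \/ W = Z)];
  colouring_opp : forall e, ecol e = rcol (opp1 e) /\ ecol e = rcol (opp2 e);
  colouring_sides : forall e, [/\ ecol e <> rcol (side1 e),
                                  ecol e <> rcol (side2 e)
                                & rcol (side1 e) <> rcol (side2 e)]
}.

Definition col_param (p q r : CC) (c : colour) : CC :=
  match c with colour1 => p | colour2 => q | colour3 => r end.

Definition markoff_map (T : coloured_tree) (p q r s : CC)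
    (phi : region T -> CC) : Prop :=
  (forall v (X Y Z : region T),
     meets v X -> meets v Y -> meets v Z ->
     rcol X = colour1 -> rcol Y = colour2 -> rcol Z = colour3 ->
     let x := phi X in let y := phi Y in let z := phi Z in
     x ^+ 2 + y ^+ 2 + z ^+ 2 + x * y * z = p * x + q * y + r * z + s) /\
  (forall e : edge T,
     phi (opp1 e) + phi (opp2 e)
       = col_param p q r (ecol e) - phi (side1 e) * phi (side2 e)).

(* An arrow assignment for phi: head e is the endpoint towards which e is
   oriented. *)
Definition arrows_of (T : coloured_tree) (phi : region T -> CC)
    (head : edge T -> vertex T) : Prop :=
  forall e : edge T,
    (head e = end1 e \/ head e = end2 e) /\
    (`|phi (opp2 e)| < `|phi (opp1 e)| -> head e = end2 e) /\
    (`|phi (opp1 e)| < `|phi (opp2 e)| -> head e = end1 e).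

Definition edge_between (T : coloured_tree) (e : edge T) (X Y : region T)
    (v : vertex T) : Prop :=
  ((side1 e = X /\ side2 e = Y) \/ (side1 e = Y /\ side2 e = X)) /\
  (end1 e = v \/ end2 e = v).

(* Main.v *)
Require Import Defs.
From HB Require Import structures.
From mathcomp Require Import all_boot all_order all_algebra ring.
Import Order.TTheory GRing.Theory Num.Theory.
From mathcomp Require Import complex Rstruct.
Set Implicit Arguments. Unset Strict Implicit.
Local Open Scope ring_scope.
Lemma key (F : numFieldType) (a b c Q R : F) :
  0 <= a -> 0 <= b -> 0 <= c -> 0 <= Q -> 0 <= R ->
  a * b <= 2 * c + R -> a * c <= 2 * b + Q -> 2 <= b -> 2 <= c ->
  a <= 2 + (Q + R) / 4.
Proof.
move=> a0 b0 c0 Q0 R0 h1 h2 b2 c2.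
have h : a * (b + c) <= 2 * (b + c) + (Q + R).
  have -> : a * (b + c) = a * b + a * c by rewrite mulrDr.
  have -> : 2 * (b + c) + (Q + R) = (2 * c + R) + (2 * b + Q) by ring.
  exact: lerD.
have ar : a \is Num.real by apply: ger0_real.
have tr : (2 : F) \is Num.real by apply: ger0_real; rewrite ler0n.
case: (real_leP ar tr) => ha.
  apply: (le_trans ha); rewrite lerDl divr_ge0 // ?addr_ge0 // ler0n //.
rewrite -lerBlDl ler_pdivlMr ?ltr0n //.
have pa : 0 <= a - 2 by rewrite subr_ge0 ltW.
apply: (le_trans (ler_wpM2l pa (_ : 4 <= b + c))).
  by have := lerD b2 c2; rewrite -natrD.
by rewrite mulrBl lerBlDl.
Qed.

Lemma at_vertex (T : coloured_tree) v (X Y Z : region T) :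
  meets v X -> meets v Y -> meets v Z ->
  rcol X = colour1 -> rcol Y = colour2 -> rcol Z = colour3 ->
  forall W, meets v W -> W = X \/ W = Y \/ W = Z.
Proof.
move=> mX mY mZ cX cY cZ W mW.
have [A [B [C [hAB hBC hAC H]]]] := three_at_vertex v.
move: mX mY mZ mW => /H hX /H hY /H hZ /H hW.
case: hX => [hX|[hX|hX]]; subst X;
case: hY => [hY|[hY|hY]]; subst Y;
case: hZ => [hZ|[hZ|hZ]]; subst Z;
case: hW => [hW|[hW|hW]]; subst W;
 first [by left | by right; left | by right; right | congruence].
Qed.

Lemma edge_lemma (T : coloured_tree) (p q r s : CC) (phi : region T -> CC)
  (head : edge T -> vertex T) v (A B C : region T) e :
  markoff_map p q r s phi -> arrows_of phi head ->
  (forall W, meets v W -> W = A \/ W = B \/ W = C) ->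
  edge_between e A B v -> head e <> v ->
  exists W, `|phi W| <= `|phi C| /\
     phi C + phi W = col_param p q r (rcol C) - phi A * phi B.
Proof.
move=> [_ Hedge] Har Hv [Hsides Hend] Hh.
have [s1 s2 s12] := colouring_sides e.
have [o1 o2] := colouring_opp e.
have [Ha1 [Ha2 Ha3]] := Har e.
have Hprod : phi (side1 e) * phi (side2 e) = phi A * phi B.
  by case: Hsides => [[-> ->]|[-> ->]] //; rewrite mulrC.
have nA : forall O, rcol O = ecol e -> O <> A.
  by move=> O hO hOA; subst O; case: Hsides => [[h1 h2]|[h1 h2]];
     [apply: s1 | apply: s2]; rewrite ?h1 ?h2 hO.
have nB : forall O, rcol O = ecol e -> O <> B.
  by move=> O hO hOA; subst O; case: Hsides => [[h1 h2]|[h1 h2]];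
     [apply: s2 | apply: s1]; rewrite ?h1 ?h2 hO.
have isC : forall O, meets v O -> rcol O = ecol e -> O = C.
  move=> O mO cO; case: (Hv O mO) => [h|[h|h]] //.
  - by case: (nA O cO h).
  - by case: (nB O cO h).
have nr : forall x y : CC, (`|x| <= `|y|) = ~~ (`|y| < `|x|).
  by move=> x y; apply: real_leNgt; apply: ger0_real.
case: Hend => Hv1.
- have [_ _ m1] := meets_end1 e; rewrite Hv1 in m1.
  have eC := isC _ m1 (esym o1).
  exists (opp2 e); split.
    rewrite -eC nr; apply/negP => lt; apply: Hh; rewrite -Hv1; exact: Ha3.
  by rewrite -eC Hedge -o1 Hprod.
- have [_ _ m2] := meets_end2 e; rewrite Hv1 in m2.
  have eC := isC _ m2 (esym o2).
  exists (opp1 e); split.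
    rewrite -eC nr; apply/negP => lt; apply: Hh; rewrite -Hv1; exact: Ha2.
  by rewrite -eC addrC Hedge -o2 Hprod.
Qed.

Theorem lemma3p3 (T : coloured_tree) (p q r s : CC)
  (phi : region T -> CC) (head : edge T -> vertex T)
  (v : vertex T) (X Y Z : region T) (eXY eXZ : edge T) :
  markoff_map p q r s phi ->
  arrows_of phi head ->
  rcol X = colour1 -> rcol Y = colour2 -> rcol Z = colour3 ->
  meets v X -> meets v Y -> meets v Z ->
  edge_between eXY X Y v -> edge_between eXZ X Z v ->
  head eXY <> v -> head eXZ <> v ->
  `|phi X| <= 2 + (`|q| + `|r|) / 4 \/ `|phi Y| < 2 \/ `|phi Z| < 2.
Proof.
move=> Hm Ha cX cY cZ mX mY mZ b1 b2 h1 h2.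
have Hv := at_vertex mX mY mZ cX cY cZ.
have Hv' : forall W, meets v W -> W = X \/ W = Z \/ W = Y.
  by move=> W /Hv; tauto.
have [W1 [l1 e1]] := edge_lemma Hm Ha Hv b1 h1.
have [W2 [l2 e2]] := edge_lemma Hm Ha Hv' b2 h2.
rewrite cZ /= in e1; rewrite cY /= in e2.
have nr : forall x y : CC, 0 <= x -> 0 <= y -> (x < y) = ~~ (y <= x).
  by move=> x y hx hy; apply: real_ltNge; apply: ger0_real.
have two0 : (0 : CC) <= 2 by rewrite ler0n.
case hy: (`|phi Y| < 2); first by right; left.
case hz: (`|phi Z| < 2); first by right; right.
left.
move: hy hz; rewrite !nr // => /negbFE hy /negbFE hz.
apply: (@key _ _ `|phi Y| `|phi Z|); rewrite ?normr_ge0 //.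
- rewrite -normrM.
  have -> : phi X * phi Y = r - (phi Z + phi W1) by rewrite e1 opprB addrC subrK.
  apply: (le_trans (ler_normB _ _)).
  rewrite addrC lerD2r.
  have -> : 2 * `|phi Z| = `|phi Z| + `|phi Z| by ring.
  apply: (le_trans (ler_normD _ _)).
  by rewrite lerD2l.
- rewrite -normrM.
  have -> : phi X * phi Z = q - (phi Y + phi W2) by rewrite e2 opprB addrC subrK.
  apply: (le_trans (ler_normB _ _)).
  rewrite addrC lerD2r.
  have -> : 2 * `|phi Y| = `|phi Y| + `|phi Y| by ring.
  apply: (le_trans (ler_normD _ _)).
  by rewrite lerD2l.
Qed.
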